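(* Let $\Gamma=(V,E)$ be a finite simplicial graph such that $A_\Gamma$ has non-trivial centre. Let $S\subseteq V$ be the set of social vertices of $\Gamma$, $k=|S|$ (so $k\ge 1$), and $\Delta=\Gamma\setminus S$, so that $\Gamma$ is the join of $S$ and $\Delta$. Then the subgroup $\mathcal{L}$ of $\mathrm{Aut}(A_\Gamma)$ generated by all lateral transvections $\tau_{sa}$ ($s\in S$, $a\in\Delta$) is isomorphic to $\mathbb{Z}^{k|\Delta|}$.
   Context: For a finite simplicial graph $\Gamma=(V,E)$, $A_\Gamma=\langle v\in V\mid [v,w]=1 \text{ for }(v,w)\in E\rangle$. A vertex $s$ is social if it is adjacent to every other vertex of $\Gamma$. The join of two graphs is their disjoint union together with all edges between a vertex of the first and a vertex of the second. For $s\in S$ and $a\in\Delta$ (vertices of $\Delta$), the lateral transvection $\tau_{sa}\in\mathrm{Aut}(A_\Gamma)$ is the automorphism sending $a\mapsto as$ and fixing all other generators $v\in V$. Here $|\Delta|$ denotes the number of vertices of $\Delta$. *)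

(* Defs.v *)
From mathcomp Require Import all_boot all_algebra.
Set Implicit Arguments. Unset Strict Implicit. Unset Printing Implicit Defensive.

Record group := Group {
  gcar :> Type;
  gmul : gcar -> gcar -> gcar;
  gone : gcar;
  ginv : gcar -> gcar;
  gmulA : forall x y z, gmul x (gmul y z) = gmul (gmul x y) z;
  gmul1l : forall x, gmul gone x = x;
  gmulVl : forall x, gmul (ginv x) x = gone
}.

Definition is_hom (G H : group) (f : G -> H) : Prop :=
  forall x y, f (gmul x y) = gmul (f x) (f y).

Definition is_aut (G : group) (f : G -> G) : Prop := is_hom f /\ bijective f.

Definition simple_graph (V : finType) (E : rel V) : Prop :=
  symmetric E /\ irreflexive E.

(* (G, iota) is the right-angled Artin group A_Gamma, defined by its
   universal property (the presentation <V | [v,w]=1 for (v,w) in E>). *)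
Definition is_raag (V : finType) (E : rel V) (G : group) (iota : V -> G) : Prop :=
  (forall x y, E x y -> gmul (iota x) (iota y) = gmul (iota y) (iota x)) /\
  forall (H : group) (f : V -> H),
    (forall x y, E x y -> gmul (f x) (f y) = gmul (f y) (f x)) ->
    exists phi : G -> H,
      [/\ is_hom phi, (forall v, phi (iota v) = f v) &
          (forall psi : G -> H, is_hom psi -> (forall v, psi (iota v) = f v) ->
             forall g, psi g = phi g)].

Definition social (V : finType) (E : rel V) (s : V) : bool :=
  [forall v, (v != s) ==> E s v].

Definition social_set (V : finType) (E : rel V) : {set V} :=
  [set s | social E s].

Definition nontrivial_centre (G : group) : Prop :=
  exists z : G, z <> gone G /\ forall g : G, gmul z g = gmul g z.

Definition lateral_transvection (V : finType) (G : group) (iota : V -> G)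
    (s a : V) (t : G -> G) : Prop :=
  [/\ is_aut t, t (iota a) = gmul (iota a) (iota s) &
      forall v, v != a -> t (iota v) = iota v].

Definition is_lat_gen (V : finType) (E : rel V) (G : group) (iota : V -> G)
    (t : G -> G) : Prop :=
  exists s a, [/\ s \in social_set E, a \notin social_set E &
                  lateral_transvection iota s a t].

Inductive in_lat_subgroup (V : finType) (E : rel V) (G : group) (iota : V -> G)
  : (G -> G) -> Prop :=
| lat_id : in_lat_subgroup E iota id
| lat_gen : forall f t, in_lat_subgroup E iota f -> is_lat_gen E iota t ->
    in_lat_subgroup E iota (t \o f)
| lat_geninv : forall f t u, in_lat_subgroup E iota f -> is_lat_gen E iota t ->
    cancel t u -> cancel u t ->
    in_lat_subgroup E iota (u \o f).

(* Main.v *)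
Require Import Defs.
From mathcomp Require Import all_boot all_algebra.
From Stdlib Require Import FunctionalExtensionality.
From mathcomp Require Import zify.
Import GRing.Theory.
Local Open Scope ring_scope.

Section GroupFacts.
Variable G : group.
Local Notation m := (@gmul G).
Local Notation e := (@gone G).
Local Notation iv := (@ginv G).

Lemma gcancl (z x y : G) : m z x = m z y -> x = y.
Proof.
move=> H. by rewrite -(gmul1l x) -(gmul1l y) -(gmulVl z) -!gmulA H.
Qed.

Lemma gmul1r (x : G) : m x e = x.
Proof.
apply: (@gcancl (iv x)). by rewrite gmulA gmulVl gmul1l.
Qed.

Lemma gmulVr (x : G) : m x (iv x) = e.
Proof.
apply: (@gcancl (iv x)). by rewrite gmulA gmulVl gmul1l gmul1r.
Qed.

Lemma ginv_uniq (x y : G) : m x y = e -> y = iv x.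
Proof. move=> H; apply: (@gcancl x); by rewrite H gmulVr. Qed.

Lemma ginvM (x y : G) : iv (m x y) = m (iv y) (iv x).
Proof.
symmetry; apply: ginv_uniq.
by rewrite -gmulA (gmulA y) gmulVr gmul1l gmulVr.
Qed.

Lemma ginv1 : iv e = e.
Proof. symmetry; apply: ginv_uniq; by rewrite gmul1l. Qed.

Lemma ginvK (x : G) : iv (iv x) = x.
Proof. symmetry; apply: ginv_uniq; by rewrite gmulVl. Qed.

Definition cen (x : G) := forall g, m x g = m g x.

Lemma cen1 : cen e. Proof. by move=> g; rewrite gmul1l gmul1r. Qed.
Lemma cenM x y : cen x -> cen y -> cen (m x y).
Proof. move=> Hx Hy g. by rewrite -gmulA Hy gmulA Hx -gmulA. Qed.
Lemma cenV x : cen x -> cen (iv x).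
Proof.
move=> Hx g. apply: (@gcancl x).
by rewrite !gmulA gmulVr gmul1l Hx -gmulA gmulVr gmul1r.
Qed.

Definition npow (x : G) n := iter n (m x) e.
Definition pw (x : G) (z : int) :=
  match z with Posz n => npow x n | Negz n => iv (npow x n.+1) end.

Lemma npowD x a b : npow x (a + b) = m (npow x a) (npow x b).
Proof.
elim: a => [|a IH] /=; first by rewrite gmul1l.
by rewrite /npow /= -/(npow x (a+b)) -/(npow x a) IH gmulA.
Qed.

Lemma cen_npow x n : cen x -> cen (npow x n).
Proof. move=> Hx; elim: n => [|n IH] /=; [exact: cen1| exact: cenM]. Qed.

Lemma cen_pw x z : cen x -> cen (pw x z).
Proof. move=> Hx; case: z => n; [exact: cen_npow | apply: cenV; exact: cen_npow]. Qed.

Lemma pw_sub x (a b : nat) : cen x ->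
  pw x (a%:Z - b%:Z) = m (npow x a) (iv (npow x b)).
Proof.
move=> Hx. case: (leqP b a) => Hab.
  rewrite subzn //= -{2}(subnK Hab) npowD -gmulA gmulVr gmul1r //.
have Hba : (a <= b)%N by apply: ltnW.
have -> : a%:Z - b%:Z = Negz (b - a).-1.
  rewrite NegzE; lia.
change (iv (npow x (b - a).-1.+1) = m (npow x a) (iv (npow x b))).
rewrite prednK ?subn_gt0 //.
rewrite -{2}(subnK Hba) npowD ginvM gmulA.
by rewrite gmulVr gmul1l.
Qed.

Lemma pw_rep x (z : int) : cen x -> exists a b : nat, z = a%:Z - b%:Z.
Proof.
move=> _; case: z => n; first by exists n, 0%N; rewrite subr0.
by exists 0%N, n.+1; rewrite NegzE sub0r.
Qed.

Lemma pwD x z1 z2 : cen x -> pw x (z1 + z2) = m (pw x z1) (pw x z2).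
Proof.
move=> Hx.
have [a1 [b1 ->]] := @pw_rep x z1 Hx.
have [a2 [b2 ->]] := @pw_rep x z2 Hx.
have -> : a1%:Z - b1%:Z + (a2%:Z - b2%:Z) = (a1 + a2)%N%:Z - (b1 + b2)%N%:Z by lia.
rewrite !pw_sub // !npowD ginvM.
rewrite -(gmulA (npow x a1) (iv (npow x b1))).
rewrite (cenV _ (cen_npow x b1 Hx)).
by rewrite !gmulA.
Qed.

Lemma pw0 x : pw x 0 = e. Proof. by []. Qed.
Lemma pw1 x : pw x 1 = x. Proof. exact: gmul1r. Qed.
End GroupFacts.
Arguments gcancl {G}.
Arguments gmul1r {G}.
Arguments gmulVr {G}.
Arguments ginv_uniq {G}.
Arguments ginvM {G}.
Arguments ginv1 {G}.
Arguments ginvK {G}.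
Arguments cen {G}.
Arguments cen1 {G}.
Arguments cenM {G}.
Arguments cenV {G}.
Arguments npow {G}.
Arguments pw {G}.
Arguments npowD {G}.
Arguments cen_npow {G}.
Arguments cen_pw {G}.
Arguments pw_sub {G}.
Arguments pw_rep {G}.
Arguments pwD {G}.
Arguments pw0 {G}.
Arguments pw1 {G}.

Section HomFacts.
Variables G H : group.
Variable f : G -> H.
Hypothesis hf : is_hom f.

Lemma hom1 : f (gone G) = gone H.
Proof.
apply: (@gcancl _ (f (gone G))). by rewrite -hf gmul1l gmul1r.
Qed.

Lemma homV x : f (ginv x) = ginv (f x).
Proof. apply: ginv_uniq. by rewrite -hf gmulVr hom1. Qed.

Lemma hom_npow x n : f (npow x n) = npow (f x) n.
Proof.
elim: n => [|n IH]; first exact: hom1.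
by rewrite /npow /= hf -/(npow x n) IH.
Qed.

Lemma hom_pw x z : f (pw x z) = pw (f x) z.
Proof.
case: z => n; first exact: hom_npow.
have := homV (npow x n.+1); rewrite hom_npow; exact.
Qed.
End HomFacts.
Arguments hom1 {G H f}.
Arguments homV {G H f}.
Arguments hom_npow {G H f}.
Arguments hom_pw {G H f}.

Definition ZV (V : finType) : group :=
  @Defs.Group {ffun V -> int} (fun x y => x + y) 0 (fun x => - x)
    (fun x y z => addrA x y z) (fun x => add0r x) (fun x => addNr x).

Lemma ZV_npow (V : finType) (x : ZV V) n u : (npow x n : {ffun V -> int}) u = x u *+ n.
Proof.
elim: n => [|n IH]; first by rewrite /npow /= ffunE.
by rewrite /npow /= -/(npow x n) ffunE IH mulrS.
Qed.

Lemma ZV_pw (V : finType) (x : ZV V) z u : (pw x z : {ffun V -> int}) u = x u * z.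
Proof.
case: z => n.
  by rewrite /= ZV_npow -mulr_natr natz.
change ((- npow x n.+1 : {ffun V -> int}) u = x u * Negz n).
by rewrite ffunE ZV_npow NegzE mulrN -mulr_natr natz.
Qed.

Lemma comm4 (G : group) (x y a b : G) : cen a -> cen b ->
  gmul x y = gmul y x -> gmul (gmul x a) (gmul y b) = gmul (gmul y b) (gmul x a).
Proof.
move=> Ha Hb Hxy.
have -> : gmul (gmul x a) (gmul y b) = gmul (gmul x y) (gmul a b).
  by rewrite -gmulA (Ha (gmul y b)) (gmulA x (gmul y b) a) (gmulA x y b) -(gmulA (gmul x y) b a) (Hb a).
have -> : gmul (gmul y b) (gmul x a) = gmul (gmul y x) (gmul a b).
  by rewrite -gmulA (Hb (gmul x a)) (gmulA y (gmul x a) b) (gmulA y x a) -(gmulA (gmul y x) a b).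
by rewrite Hxy.
Qed.

Section Raag.
Variables (V : finType) (E : rel V) (G : group) (iota : V -> G).
Hypothesis HR : is_raag E iota.
Local Notation S := (social_set E).

Lemma hom_ext (H : group) (f g : G -> H) : is_hom f -> is_hom g ->
  (forall v, f (iota v) = g (iota v)) -> f = g.
Proof.
move=> hf hg Hfg. have [Hc Hu] := HR.
have Hc' : forall x y, E x y -> gmul (f (iota x)) (f (iota y)) = gmul (f (iota y)) (f (iota x)).
  by move=> x y Exy; rewrite -!hf Hc.
have [phi [_ _ Huniq]] := Hu H (fun v => f (iota v)) Hc'.
apply: functional_extensionality => x.
rewrite (Huniq f hf (fun v => erefl)) (Huniq g hg (fun v => esym (Hfg v))) //.
Qed.

Lemma social_cen s : s \in S -> cen (iota s).
Proof.
move=> Hs g.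
pose c := fun x => gmul (gmul (iota s) x) (ginv (iota s)).
have hc : is_hom c.
  move=> x y; rewrite /c.
  by rewrite !gmulA -(gmulA (gmul (iota s) x) (ginv (iota s)) (iota s)) gmulVl gmul1r.
have hid : is_hom (fun x : G => x) by [].
have Hcg := @hom_ext G c (fun x => x) hc hid.
have : c = (fun x => x).
  apply: Hcg => v. rewrite /c.
  case: (eqVneq v s) => [->|Hvs]; first by rewrite -gmulA gmulVr gmul1r.
  move: Hs; rewrite inE => /forallP /(_ v); rewrite Hvs /= => Esv.
  by rewrite (HR.1 _ _ Esv) -gmulA gmulVr gmul1r.
move=> /(congr1 (fun h => h g)); rewrite /c => Hc.
by rewrite -{2}Hc -gmulA gmulVl gmul1r.
Qed.

Definition NF (l : seq V) (c : V -> int) : G :=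
  foldr (fun s acc => gmul (pw (iota s) (c s)) acc) (gone G) l.

Lemma NF_cen l c : {subset l <= S} -> cen (NF l c).
Proof.
elim: l => [|s l IH] Hl /=; first exact: cen1.
apply: cenM; first by apply: cen_pw; apply: social_cen; apply: Hl; rewrite inE eqxx.
by apply: IH => x Hx; apply: Hl; rewrite inE Hx orbT.
Qed.

Lemma NF_hom (f : G -> G) l c : is_hom f -> (forall s, s \in l -> f (iota s) = iota s) ->
  f (NF l c) = NF l c.
Proof.
move=> hf; elim: l => [|s l IH] Hl /=; first exact: hom1.
have Hl' : forall x, x \in l -> f (iota x) = iota x.
  by move=> x Hx; apply: Hl; rewrite inE Hx orbT.
by rewrite hf (hom_pw hf) Hl ?inE ?eqxx // IH.
Qed.

Lemma NF_eq l c d : (forall s, s \in l -> c s = d s) -> NF l c = NF l d.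
Proof.
elim: l => [|s l IH] Hl //=.
have Hl' : forall x, x \in l -> c x = d x.
  by move=> x Hx; apply: Hl; rewrite inE Hx orbT.
by rewrite Hl ?inE ?eqxx // IH.
Qed.

Lemma NF0 l c : (forall s, s \in l -> c s = 0) -> NF l c = gone G.
Proof.
elim: l => [|s l IH] Hl //=.
have Hl' : forall x, x \in l -> c x = 0.
  by move=> x Hx; apply: Hl; rewrite inE Hx orbT.
by rewrite Hl ?inE ?eqxx // IH ?gmul1l.
Qed.

Lemma NFD l c d : {subset l <= S} ->
  gmul (NF l c) (NF l d) = NF l (fun s => c s + d s).
Proof.
elim: l => [|s l IH] Hl /=; first exact: gmul1l.
have Hl' : {subset l <= S} by move=> x Hx; apply: Hl; rewrite inE Hx orbT.
have Hs : cen (iota s) by apply: social_cen; apply: Hl; rewrite inE eqxx.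
rewrite -IH // pwD //.
rewrite -!gmulA; congr (gmul _ _).
by rewrite !gmulA (NF_cen l c Hl').
Qed.

Lemma NF_delta l s : uniq l -> s \in l ->
  NF l (fun s' => if s' == s then 1 else 0) = iota s.
Proof.
elim: l => [|s0 l IH] //= /andP [Hs0 Hu]; rewrite inE.
case: (eqVneq s0 s) => [<- _|Hne /= Hsl].
  rewrite NF0 ?gmul1r ?pw1 // => x Hx.
  by case: eqP Hx => // ->; rewrite (negbTE Hs0).
by rewrite gmul1l IH.
Qed.

Definition spec (c : V -> V -> int) v :=
  if v \in S then iota v else gmul (iota v) (NF (enum S) (fun s => c s v)).

Definition isT c (f : G -> G) := is_hom f /\ forall v, f (iota v) = spec c v.

Lemma enumS_sub : {subset enum S <= S}.
Proof. by move=> x; rewrite mem_enum. Qed.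

Lemma spec_eq c v : exists z, cen z /\ spec c v = gmul (iota v) z.
Proof.
rewrite /spec; case: ifP => _.
  by exists (gone G); split; [exact: cen1 | rewrite gmul1r].
by exists (NF (enum S) (fun s => c s v)); split => //; apply: NF_cen; exact: enumS_sub.
Qed.

Lemma isT_exists c : exists f, isT c f.
Proof.
have [Hc Hu] := HR.
have Hc' : forall x y, E x y -> gmul (spec c x) (spec c y) = gmul (spec c y) (spec c x).
  move=> x y Exy.
  have [zx [Czx ->]] := spec_eq c x.
  have [zy [Czy ->]] := spec_eq c y.
  by apply: comm4 => //; apply: Hc.
have [phi [hphi Hphi _]] := Hu G (spec c) Hc'.
by exists phi.
Qed.

Lemma isT_uniq c f g : isT c f -> isT c g -> f = g.
Proof.
move=> [hf Hf] [hg Hg]; apply: hom_ext => // v; by rewrite Hf Hg.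
Qed.

Lemma isT_ext c d f : (forall s a, s \in S -> a \notin S -> c s a = d s a) ->
  isT c f -> isT d f.
Proof.
move=> Hcd [hf Hf]; split => // v; rewrite Hf /spec.
case: ifP => // Hv; congr (gmul _ _); apply: NF_eq => s Hs.
by apply: Hcd; [rewrite -mem_enum | rewrite Hv].
Qed.

Lemma isT_id : isT (fun _ _ => 0) id.
Proof.
split => // v; rewrite /spec; case: ifP => // _.
by rewrite NF0 ?gmul1r.
Qed.

Lemma isT_comp c d f g : isT c f -> isT d g ->
  isT (fun s a => c s a + d s a) (f \o g).
Proof.
move=> [hf Hf] [hg Hg]; split; first by move=> x y /=; rewrite hg hf.
move=> v /=; rewrite Hg /spec.
case: ifP => Hv; first by rewrite Hf /spec Hv.
rewrite hf Hf /spec Hv (@NF_hom f _ _ hf); last first.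
  by move=> s; rewrite mem_enum => Hs; rewrite Hf /spec Hs.
by rewrite -gmulA NFD //; exact: enumS_sub.
Qed.

End Raag.
Arguments NF {V G} iota l c.
Arguments NF0 {V G iota l c}.
Arguments NF_delta {V G iota l s}.
Arguments spec {V} E {G} iota c v.
Arguments isT {V} E {G} iota c f.
Arguments isT_exists {V E G iota} HR c.
Arguments isT_uniq {V E G iota} HR {c f g}.
Arguments isT_ext {V E G iota c d f}.
Arguments isT_id {V E G iota}.
Arguments isT_comp {V E G iota} HR {c d f g}.

Lemma ZV_mulE (V : finType) (x y : ZV V) u : (gmul x y : {ffun V -> int}) u = x u + y u.
Proof. by rewrite /= ffunE. Qed.

Set Implicit Arguments.
Unset Strict Implicit.
Section Raag2.
Variables (V : finType) (E : rel V) (G : group) (iota : V -> G).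
Hypothesis HR : is_raag E iota.
Local Notation S := (social_set E).
Local Notation isT := (isT E iota).
Local Notation in_lat := (in_lat_subgroup E iota).

Definition ee (s a : V) : V -> V -> int :=
  fun s' a' => if (s' == s) && (a' == a) then 1 else 0.

Lemma spec_ee s a v : s \in S -> a \notin S ->
  spec E iota (ee s a) v = if v == a then gmul (iota a) (iota s) else iota v.
Proof.
move=> Hs Ha; rewrite /spec; case: ifP => Hv.
  by case: eqP => // Hva; move: Hv; rewrite Hva (negbTE Ha).
case: eqP => [->|Hva].
  rewrite (@NF_eq _ _ _ _ _ (fun s' => if s' == s then 1 else 0)); last first.
    by move=> s' _; rewrite /ee eqxx andbT.
  by rewrite NF_delta ?enum_uniq ?mem_enum.
rewrite NF0 ?gmul1r // => s' _; rewrite /ee.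
by case: eqP => //= _; case: eqP.
Qed.

Lemma isT_lat s a t : s \in S -> a \notin S -> lateral_transvection iota s a t ->
  isT (ee s a) t.
Proof.
move=> Hs Ha [[ht _] Hta Htv]; split => // v; rewrite spec_ee //.
by case: eqP => [->|/eqP Hva]; [exact: Hta | exact: Htv].
Qed.

Lemma isT_inv c t u : isT c t -> cancel t u -> cancel u t ->
  isT (fun s a => - c s a) u.
Proof.
move=> Ht Htu Hut.
have [w Hw] := isT_exists HR (fun s a => - c s a).
have Htw : t \o w = id.
  apply: (isT_uniq HR (c := fun _ _ => 0)); last exact: isT_id.
  apply: (isT_ext (c := fun s a => c s a + - c s a)); first by move=> *; rewrite subrr.
  exact: (isT_comp HR).
have -> : u = w.
  apply: functional_extensionality => x.
  by rewrite -{1}[x]/(id x) -Htw /= Htu.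
exact: Hw.
Qed.

Lemma lat_isT s a t : s \in S -> a \notin S -> isT (ee s a) t ->
  exists u, [/\ lateral_transvection iota s a t, cancel t u & cancel u t].
Proof.
move=> Hs Ha Ht.
have [u Hu] := isT_exists HR (fun s' a' => - ee s a s' a').
have H1 : t \o u = id.
  apply: (isT_uniq HR (c := fun _ _ => 0)); last exact: isT_id.
  apply: (isT_ext (c := fun s' a' => ee s a s' a' + - ee s a s' a')); first by move=> *; rewrite subrr.
  exact: (isT_comp HR).
have H2 : u \o t = id.
  apply: (isT_uniq HR (c := fun _ _ => 0)); last exact: isT_id.
  apply: (isT_ext (c := fun s' a' => - ee s a s' a' + ee s a s' a')); first by move=> *; rewrite addNr.
  exact: (isT_comp HR).
have Ctu : cancel t u by move=> x; have := congr1 (fun h => h x) H2.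
have Cut : cancel u t by move=> x; have := congr1 (fun h => h x) H1.
exists u; split => //; split.
- split; first exact: Ht.1.
  by exists u.
- by rewrite Ht.2 spec_ee // eqxx.
- by move=> v Hv; rewrite Ht.2 spec_ee // (negbTE Hv).
Qed.

Lemma lat_comp f g : in_lat f -> in_lat g -> in_lat (f \o g).
Proof.
move=> Hf Hg; elim: Hf => [|f' t _ IH Ht|f' t u _ IH Ht Htu Hut].
- exact: Hg.
- exact: lat_gen IH Ht.
- exact: lat_geninv IH Ht Htu Hut.
Qed.

Lemma lat_isT_ex f : in_lat f -> exists c, isT c f.
Proof.
elim => [|f' t _ [c Hc] [s [a [Hs Ha Ht]]]|f' t u _ [c Hc] [s [a [Hs Ha Ht]]] Htu Hut].
- by exists (fun _ _ => 0); exact: isT_id.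
- exists (fun s' a' => ee s a s' a' + c s' a'); apply: (isT_comp HR) => //.
  exact: isT_lat.
- exists (fun s' a' => - ee s a s' a' + c s' a'); apply: (isT_comp HR) => //.
  exact: (@isT_inv _ _ _ (@isT_lat _ _ _ Hs Ha Ht) Htu Hut).
Qed.

Lemma gen_pow s a z : s \in S -> a \notin S ->
  exists f, in_lat f /\ isT (fun s' a' => z * ee s a s' a') f.
Proof.
move=> Hs Ha.
have [t Ht] := isT_exists HR (ee s a).
have [u [Hlt Htu Hut]] := lat_isT Hs Ha Ht.
have Hu := isT_inv Ht Htu Hut.
have Hgt : is_lat_gen E iota t by exists s, a; split.
have Pos : forall n : nat, exists f, in_lat f /\ isT (fun s' a' => n%:Z * ee s a s' a') f.
  elim => [|n [f [Lf Tf]]].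
    exists id; split; first exact: lat_id.
    by apply: (isT_ext (c := fun _ _ => 0)); [move=> *; rewrite mul0r | exact: isT_id].
  exists (t \o f); split; first exact: lat_gen.
  apply: (isT_ext (c := fun s' a' => ee s a s' a' + n%:Z * ee s a s' a')).
    by move=> *; rewrite intS mulrDl mul1r.
  exact: (isT_comp HR).
have Neg : forall n : nat, exists f, in_lat f /\ isT (fun s' a' => - (n%:Z) * ee s a s' a') f.
  elim => [|n [f [Lf Tf]]].
    exists id; split; first exact: lat_id.
    by apply: (isT_ext (c := fun _ _ => 0)); [move=> *; rewrite oppr0 mul0r | exact: isT_id].
  exists (u \o f); split; first exact: (lat_geninv Lf Hgt Htu Hut).
  apply: (isT_ext (c := fun s' a' => - ee s a s' a' + - (n%:Z) * ee s a s' a')).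
    by move=> *; rewrite intS opprD mulrDl mulN1r.
  exact: (isT_comp HR).
case: z => n; first exact: Pos.
by rewrite NegzE; exact: Neg.
Qed.

Lemma all_in_lat c : exists f, in_lat f /\ isT c f.
Proof.
suff H : forall (l : seq (V * V)) c,
    (forall s a, s \in S -> a \notin S -> (s, a) \notin l -> c s a = 0) ->
    exists f, in_lat f /\ isT c f.
  by apply: (H (enum {: V * V})) => s a _ _; rewrite mem_enum.
elim => [|[s a] l IH] {}c Hc.
  exists id; split; first exact: lat_id.
  by apply: (isT_ext (c := fun _ _ => 0)); [move=> s a Hs Ha; rewrite Hc | exact: isT_id].
case: (boolP ((s \in S) && (a \notin S))) => [/andP [Hs Ha]|Hsa].
  pose c' := fun s' a' => if (s' == s) && (a' == a) then 0 else c s' a'.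
  have [f [Lf Tf]] : exists f, in_lat f /\ isT c' f.
    apply: IH => s' a' Hs' Ha' Hl; rewrite /c'.
    case: ifP => // Hne; apply: Hc => //; rewrite inE negb_or Hl andbT.
    by rewrite xpair_eqE Hne.
  have [g [Lg Tg]] := gen_pow (c s a) Hs Ha.
  exists (g \o f); split; first exact: lat_comp.
  have Tgf := isT_comp HR Tg Tf.
  apply: (isT_ext _ Tgf) => s' a' _ _; rewrite /c' /ee.
  case: ifP => [/andP [/eqP -> /eqP ->]|_]; first by rewrite mulr1 addr0.
  by rewrite mulr0 add0r.
apply: IH => s' a' Hs' Ha' Hl.
case: (eqVneq (s', a') (s, a)) => [[e1 e2]|Hne].
  by move: Hsa; rewrite -e1 -e2 Hs' Ha'.
by apply: Hc => //; rewrite inE negb_or Hne Hl.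
Qed.

Lemma eps_NF (eps : G -> ZV V) : is_hom eps ->
  (forall v, eps (iota v) = [ffun u => if v == u then 1 else 0]) ->
  forall l c u, uniq l -> (eps (NF iota l c) : {ffun V -> int}) u = if u \in l then c u else 0.
Proof.
move=> he Hi; elim => [|s l IH] c u /=.
  by rewrite (hom1 he) ffunE.
move=> /andP [Hsl Hu].
rewrite he ZV_mulE (hom_pw he) ZV_pw Hi ffunE IH // inE.
case: (eqVneq u s) => [->|Hne] /=; first by rewrite (negbTE Hsl) mul1r addr0.
by rewrite mul0r add0r.
Qed.

Lemma eps_T (eps : G -> ZV V) c f s a : is_hom eps ->
  (forall v, eps (iota v) = [ffun u => if v == u then 1 else 0]) ->
  isT c f -> s \in S -> a \notin S -> (eps (f (iota a)) : {ffun V -> int}) s = c s a.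
Proof.
move=> he Hi [hf Hf] Hs Ha.
rewrite Hf /spec (negbTE Ha) he ZV_mulE Hi ffunE eps_NF ?enum_uniq // mem_enum Hs.
have -> : (a == s) = false by apply/eqP => e; move: Ha; rewrite e Hs.
by rewrite add0r.
Qed.

End Raag2.

Theorem mainTheorem3 (V : finType) (E : rel V) (G : group) (iota : V -> G) :
  simple_graph E ->
  is_raag E iota ->
  nontrivial_centre G ->
  let k := #|social_set E| in
  let d := #|~: social_set E| in
  exists Phi : (G -> G) -> {ffun 'I_(k * d) -> int},
    [/\ (forall f g, in_lat_subgroup E iota f -> in_lat_subgroup E iota g ->
           Phi (f \o g) = Phi f + Phi g),
        (forall f g, in_lat_subgroup E iota f -> in_lat_subgroup E iota g ->
           Phi f = Phi g -> f = g) &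
        (forall z, exists f, in_lat_subgroup E iota f /\ Phi f = z)].
Proof.
move=> _ HR _ k d.
have [eps [he Hi _]] := HR.2 (ZV V) (fun v => [ffun u => if v == u then 1 else 0])
  (fun x y _ => addrC _ _).
have cardP : #|{: 'I_k * 'I_d}| = (k * d)%N by rewrite card_prod !card_ord.
pose idx (i : 'I_(k * d)) : 'I_k * 'I_d := enum_val (cast_ord (esym cardP) i).
pose sv (p : 'I_k * 'I_d) : V := enum_val (A := social_set E) p.1.
pose av (p : 'I_k * 'I_d) : V := enum_val (A := ~: social_set E) p.2.
have HsS : forall p, sv p \in social_set E by move=> p; exact: enum_valP.
have HaS : forall p, av p \notin social_set E.
  by move=> p; have := enum_valP (A := ~: social_set E) p.2; rewrite inE.
pose Phi (f : G -> G) : {ffun 'I_(k * d) -> int} :=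
  [ffun i => (eps (f (iota (av (idx i)))) : {ffun V -> int}) (sv (idx i))].
exists Phi; split.
- move=> f g Lf Lg.
  have [c Tc] := lat_isT_ex HR Lf.
  have [c' Tc'] := lat_isT_ex HR Lg.
  have Tfg := isT_comp HR Tc Tc'.
  apply/ffunP => i; rewrite !ffunE.
  by rewrite (eps_T he Hi Tfg (HsS _) (HaS _)) (eps_T he Hi Tc (HsS _) (HaS _))
    (eps_T he Hi Tc' (HsS _) (HaS _)).
- move=> f g Lf Lg Heq.
  have [c Tc] := lat_isT_ex HR Lf.
  have [c' Tc'] := lat_isT_ex HR Lg.
  apply: (isT_uniq HR Tc).
  apply: (isT_ext _ Tc') => s a Hs Ha.
  have Ha' : a \in ~: social_set E by rewrite inE.
  pose p : 'I_k * 'I_d := (enum_rank_in Hs s, enum_rank_in Ha' a).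
  pose i := cast_ord cardP (enum_rank p).
  have Hidx : idx i = p by rewrite /idx /i cast_ordK enum_rankK.
  have E1 : sv (idx i) = s by rewrite Hidx /sv /= enum_rankK_in.
  have E2 : av (idx i) = a by rewrite Hidx /av /= enum_rankK_in.
  have := congr1 (fun F : {ffun 'I_(k * d) -> int} => F i) Heq; rewrite !ffunE E1 E2.
  by rewrite (eps_T he Hi Tc Hs Ha) (eps_T he Hi Tc' Hs Ha).
- move=> z.
  pose c := fun s a => if [pick i | (sv (idx i) == s) && (av (idx i) == a)] is Some i
                       then z i else 0.
  have [f [Lf Tf]] := all_in_lat HR c.
  exists f; split => //.
  apply/ffunP => i; rewrite ffunE (eps_T he Hi Tf (HsS _) (HaS _)) /c.
  case: pickP => [j /andP [/eqP E1 /eqP E2]|H]; last by have := H i; rewrite !eqxx.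
  congr (z _).
  have Ep : idx j = idx i.
    move: E1 E2; rewrite /sv /av => /enum_val_inj E1 /enum_val_inj E2.
    by case: (idx j) (idx i) E1 E2 => [? ?] [? ?] /= -> ->.
  by move: Ep; rewrite /idx => /enum_val_inj /cast_ord_inj.
Qed.
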